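(* Let $(b_n)_{n\ge0}$ be defined by $b_0=b_1=0$, $b_2=1$ and, for $n\ge3$, \[ b_n \;=\; \tfrac{19}{12}(n+1)-3 \;+\; \binom n2^{-1}\sum_{p=1}^{n}(n-p)\,b_{p-1}. \] Then for all $n\ge4$, \[ b_n=\frac{1}{24n(n-1)(n-2)}\Bigl(57n^4-48n^3H_n-178n^3+144n^2H_n+135n^2-96nH_n-14n+24\Bigr), \] and in particular $b_n\sim\tfrac{19}{8}n$ as $n\to\infty$.
   Context: $H_n=\sum_{k=1}^n1/k$ is the $n$-th harmonic number. (In the paper, $b_n=\mathbb E[\hat C_n]$ is the expected number of key comparisons made by Quickselect with Yaroslavskiy's dual-pivot partitioning to find the minimum of a uniformly random permutation of $n$ distinct keys.) *)

(* Defs.v *)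
From HB Require Import structures.
From mathcomp Require Import all_boot all_order all_algebra.
Set Implicit Arguments. Unset Strict Implicit. Unset Printing Implicit Defensive.
Import Order.TTheory GRing.Theory Num.Theory.
Local Open Scope ring_scope.

Definition harmonic (n : nat) : rat := \sum_(1 <= k < n.+1) (k%:R)^-1.

(** Given s = [:: b_0; ...; b_(n-1)], compute b_n by the recurrence. *)
Definition b_next (n : nat) (s : seq rat) : rat :=
  if (n <= 1)%N then 0
  else if n == 2%N then 1
  else (19%:R / 12%:R) * (n.+1)%:R - 3%:R
       + ('C(n, 2))%:R^-1 * \sum_(1 <= p < n.+1) ((n - p)%N)%:R * nth 0 s p.-1.

Fixpoint b_list (n : nat) : seq rat :=
  match n with
  | 0 => [::]
  | k.+1 => rcons (b_list k) (b_next k (b_list k))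
  end.

(** b_n : expected number of comparisons. *)
Definition b (n : nat) : rat := nth 0 (b_list n.+1) n.

Lemma b_small : [:: b 0; b 1; b 2; b 3] = [:: 0; 0; 1; b 3]. Proof. by []. Qed.

(* Main.v *)
Require Import Defs.
From HB Require Import structures.
From mathcomp Require Import all_boot all_order all_algebra.
From mathcomp Require Import ring lra zify.
Import Order.TTheory GRing.Theory Num.Theory.
Local Open Scope ring_scope.

Definition S n := \sum_(j < n) ((n.-1 - j)%N)%:R * b j.
Definition T n := \sum_(j < n) b j.
Definition g' (x : rat) : rat := (19%:R / 12%:R) * (x + 1) - 3%:R.

Lemma binr n : ('C(n, 2))%:R = n%:R * (n%:R - 1) / 2 :> rat.
Proof.
elim: n => [|n IH]; first by rewrite bin0n /=; ring.
rewrite binS bin1 natrD IH -natr1.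
have h2 : (2:rat) != 0 by [].
apply: (mulIf h2); rewrite mulrDl !mulfVK //; ring.
Qed.

Lemma harmS n : harmonic n.+1 = harmonic n + (n.+1)%:R^-1.
Proof. by rewrite /harmonic big_nat_recr. Qed.

Lemma harm0 : harmonic 0 = 0.
Proof. by rewrite /harmonic big_geq. Qed.

Lemma TS n : T n.+1 = T n + b n.
Proof. by rewrite /T big_ord_recr. Qed.

Lemma SS n : S n.+1 = S n + T n.
Proof.
rewrite /S /T big_ord_recr /= subnn mul0r addr0 -big_split /=.
apply: eq_bigr => i _.
have -> : (n - i = (n.-1 - i).+1)%N by have := ltn_ord i; lia.
by rewrite -natr1 mulrDl mul1r.
Qed.

Lemma S3 n : S n.+2 - 2 * S n.+1 + S n = b n.
Proof. rewrite !SS TS; ring. Qed.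

Lemma size_b_list n : size (b_list n) = n.
Proof. by elim: n => //= n IH; rewrite size_rcons IH. Qed.

Lemma nth_b_list n j : (j < n)%N -> nth 0 (b_list n) j = b j.
Proof.
elim: n => // n IH; rewrite ltnS leq_eqVlt => /orP [/eqP ->|lt].
  by rewrite /b.
by rewrite /= nth_rcons size_b_list lt IH.
Qed.

Lemma bE n : b n = b_next n (b_list n).
Proof. by rewrite /b /= nth_rcons size_b_list ltnn eqxx. Qed.

Lemma b_rec n : (3 <= n)%N -> b n = g' n%:R + ('C(n, 2))%:R^-1 * S n.
Proof.
move=> n3; rewrite bE /b_next.
have -> : (n <= 1)%N = false by lia.
have -> : (n == 2%N) = false by lia.
have -> : \sum_(1 <= p < n.+1) ((n - p)%N)%:R * nth 0 (b_list n) p.-1 = S n.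
  rewrite /S big_add1 /= big_mkord; apply: eq_bigr => i _.
  have -> : (n - i.+1 = n.-1 - i)%N by lia.
  by rewrite nth_b_list.
by rewrite /g' natr1.
Qed.

Lemma bA n : (3 <= n)%N -> ('C(n, 2))%:R * (b n - g' n%:R) = S n.
Proof.
move=> n3; rewrite b_rec // addrAC subrr add0r mulVKf //.
rewrite pnatr_eq0 -lt0n bin_gt0; lia.
Qed.
Definition F' (x h : rat) : rat := (24 * x * (x - 1) * (x - 2))^-1 *
           (57 * x ^+ 4 - 48 * x ^+ 3 * h - 178 * x ^+ 3
            + 144 * x ^+ 2 * h + 135 * x ^+ 2
            - 96 * x * h - 14 * x + 24).

Lemma key (x h B : rat) : 3 <= x ->
  (x+2)*(x+1)/2 * (B - g' (x+2)) =
   2*((x+1)*x/2*(F' (x+1) (h + (x+1)^-1) - g' (x+1))) - x*(x-1)/2*(F' x h - g' x) + F' x h ->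
  B = F' (x+2) (h + (x+1)^-1 + (x+2)^-1).
Proof.
move=> x3.
have h1 : x != 0 by apply/eqP; lra.
have h2 : x - 1 != 0 by apply/eqP; lra.
have h3 : x - 2 != 0 by apply/eqP; lra.
have h4 : x + 1 != 0 by apply/eqP; lra.
have h5 : x + 2 != 0 by apply/eqP; lra.
have c0 : (x+2)*(x+1)/2 != 0 by rewrite !mulf_neq0 // invr_eq0.
move=> E.
apply: (mulfI c0).
have -> : (x+2)*(x+1)/2 * B = (x+2)*(x+1)/2 * (B - g' (x+2)) + (x+2)*(x+1)/2 * g' (x+2) by rewrite mulrBr subrK.
rewrite E /F' /g'.
field; by rewrite addrK ?h1 ?h2 ?h3 ?h4 ?h5.
Qed.

Lemma step n : (3 <= n)%N -> b n = F' n%:R (harmonic n) ->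
  b n.+1 = F' n.+1%:R (harmonic n.+1) -> b n.+2 = F' n.+2%:R (harmonic n.+2).
Proof.
move=> n3 e0 e1.
set x : rat := n%:R.
have x1 : n.+1%:R = x + 1 by rewrite -natr1.
have x2 : n.+2%:R = x + 2 by rewrite -natr1 -natr1 -addrA.
rewrite !harmS x2 x1.
have h1 : harmonic n.+1 = harmonic n + (x+1)^-1 by rewrite harmS x1.
apply: key; first by rewrite /x (ler_nat rat 3 n).
have E2 := bA n.+2 ltac:(lia).
rewrite binr x2 (_ : x + 2 - 1 = x + 1) in E2; last by ring.
have E1 := bA n.+1 ltac:(lia).
rewrite binr e1 x1 h1 addrK in E1.
have E0 := bA n n3.
rewrite binr e0 in E0.
rewrite E2 E1 E0 -e0 -(S3 n); ring.
Qed.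

Lemma b0 : b 0 = 0. Proof. by []. Qed.
Lemma b1 : b 1 = 0. Proof. by []. Qed.
Lemma b2 : b 2 = 1. Proof. by []. Qed.

Lemma b3 : b 3 = F' 3%:R (harmonic 3).
Proof.
rewrite b_rec // (binr 3).
rewrite /S !big_ord_recr big_ord0 /= b0 b1 b2.
rewrite !mulr0 ?mulr1 !harmS harm0 /F' /g'.
by field.
Qed.

Lemma b4 : b 4 = F' 4%:R (harmonic 4).
Proof.
rewrite b_rec // (binr 4).
rewrite /S !big_ord_recr big_ord0 /= b0 b1 b2 subnn mul0r (_ : (3 - 2)%N = 1%N) //.
rewrite !mulr0 ?mulr1 !harmS harm0 /F' /g'.
by field.
Qed.
Lemma boundF (x h : rat) : 4 <= x -> 0 <= h ->
  `|F' x h / x - 19 / 8| <= (2 * h + 1) / x.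
Proof.
move=> x4 h0.
have h1 : x != 0 by apply/eqP; lra.
have h2 : x - 1 != 0 by apply/eqP; lra.
have h3 : x - 2 != 0 by apply/eqP; lra.
have x0 : 0 < x by lra.
have p24 : 24 <= x * (x - 1) * (x - 2).
  have a : 12 <= x * (x - 1) by nra.
  have : 2 <= x - 2 by lra.
  nra.
set u := x^-1.
set c := (x * (x - 1) * (x - 2))^-1.
have u0 : 0 < u by rewrite invr_gt0.
have c0 : 0 <= c by rewrite invr_ge0; lra.
have c24 : c <= 24^-1.
  rewrite lef_pV2 // ?posrE //; lra.
have -> : F' x h / x - 19 / 8 = - ((48 * h + 7) / 24 * u) + u * c.
  rewrite /F' /u /c; field.
  by rewrite h1 h2 h3.
apply: le_trans (ler_normD _ _) _.
rewrite normrN !ger0_norm; first last.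
- by apply: mulr_ge0; lra.
- by apply: mulr_ge0; [lra | lra].
have : u * c <= u / 24 by rewrite ler_wpM2l //; lra.
rewrite /= -/u.
nra.
Qed.
Lemma fin (e x h : rat) : 0 < e -> 0 <= h -> h ^+ 2 <= 4 * x ->
  64 / (e * e) + 2 / e < x -> (2 * h + 1) / x < e.
Proof.
move=> e0 h0 hx Kx.
set w := e^-1.
have ew : e * w = 1 by exact: mulfV (lt0r_neq0 e0).
have w0 : 0 < w by rewrite invr_gt0.
have K : 64 / (e * e) + 2 / e = 64 * w * w + 2 * w by rewrite /w invfM mulrA.
rewrite K in Kx.
have x0 : 0 < x by nra.
have A : 64 * w + 2 < e * x.
  have : e * (64 * w * w + 2 * w) < e * x by rewrite ltr_pM2l.
  have -> : e * (64 * w * w + 2 * w) = 64 * w * (e * w) + 2 * (e * w) by ring.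
  by rewrite ew !mulr1.
have B : 64 * x <= e * x * (e * x).
  have : 64 * w * (e * x) <= e * x * (e * x) by rewrite ler_pM2r; nra.
  have -> : 64 * w * (e * x) = 64 * x * (e * w) by ring.
  by rewrite ew mulr1.
have C : 4 * h < e * x by nra.
rewrite (ltr_pdivrMr _ _ x0).
lra.
Qed.

Lemma harm_ge0 n : 0 <= harmonic n.
Proof. by apply: sumr_ge0 => i _; rewrite invr_ge0. Qed.

Lemma harm_le n : harmonic n <= n%:R.
Proof.
elim: n => [|n IH]; first by rewrite harm0.
rewrite harmS.
have : (n.+1%:R : rat)^-1 <= 1 by rewrite invf_le1 // ?ler1n ?ltr0n.
move: (n.+1%:R : rat)^-1 => u u1.
rewrite -natr1; lra.
Qed.

Lemma harm_sq n : harmonic n ^+ 2 <= 4 * n%:R.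
Proof.
elim: n => [|n IH]; first by rewrite harm0 expr0n mulr0.
have h0 := harm_ge0 n; have hl := harm_le n.
rewrite harmS.
have u1 : (n.+1%:R : rat)^-1 <= 1 by rewrite invf_le1 // ?ler1n ?ltr0n.
have u0 : 0 <= (n.+1%:R : rat)^-1 by rewrite invr_ge0.
have uu : n.+1%:R * (n.+1%:R : rat)^-1 = 1 by rewrite mulfV // pnatr_eq0.
move: (n.+1%:R : rat)^-1 u0 u1 uu => u u0 u1 uu.
rewrite -natr1 in uu *.
move: (harmonic n) h0 hl IH => h h0 hl IH.
have hu : h * u <= n%:R * u by rewrite ler_wpM2r.
have uu2 : u * u <= u * 1 by rewrite ler_wpM2l.
rewrite mulr1 in uu2.
have e : (h + u) ^+ 2 = h ^+ 2 + 2 * (h * u) + u * u by ring.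
rewrite e.
rewrite mulrDl mul1r in uu.
lra.
Qed.

Lemma b_closed n : (3 <= n)%N -> b n = F' n%:R (harmonic n).
Proof.
suff H : forall m, b m.+3 = F' m.+3%:R (harmonic m.+3) /\ b m.+4 = F' m.+4%:R (harmonic m.+4).
  by case: n => [|[|[|m]]] // _; case: (H m).
elim => [|m [IH1 IH2]]; first by split; [exact: b3 | exact: b4].
by split => //; apply: step.
Qed.

Theorem proposition5p3 :
  (forall n : nat, (4 <= n)%N ->
     b n = (24 * n%:R * (n%:R - 1) * (n%:R - 2))^-1 *
           (57 * n%:R ^+ 4 - 48 * n%:R ^+ 3 * harmonic n - 178 * n%:R ^+ 3
            + 144 * n%:R ^+ 2 * harmonic n + 135 * n%:R ^+ 2
            - 96 * n%:R * harmonic n - 14 * n%:R + 24))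
  /\
  (forall eps : rat, 0 < eps ->
     exists N : nat, forall n : nat, (N <= n)%N ->
       `| b n / n%:R - 19 / 8 | < eps).
Proof.
split.
  by move=> n n4; apply: b_closed; lia.
move=> e e0.
set K := 64 / (e * e) + 2 / e.
have K0 : 0 <= K.
  have ei : 0 <= e^-1 by rewrite invr_ge0; lra.
  have eei : 0 <= (e * e)^-1 by rewrite invr_ge0; nra.
  rewrite /K; apply: addr_ge0; apply: mulr_ge0 => //; lra.
exists (Num.Def.archi_bound K).+4 => n hn.
have n3 : (3 <= n)%N by lia.
rewrite (@b_closed n n3).
have x4 : 4 <= (n%:R : rat) by rewrite (ler_nat rat 4 n); lia.
apply: le_lt_trans (@boundF _ _ x4 (harm_ge0 n)) _.
apply: fin; [exact: e0 | exact: harm_ge0 | exact: harm_sq |].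
apply: lt_le_trans (archi_boundP K0) _.
rewrite ler_nat; lia.
Qed.
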